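(* In the setting of the context (with assumptions (A.1)–(A.3)), let $\{(u_k,v_k)\}$, $\{(z_k,w_k)\}$, $\{\gamma_k\}$, $\{\rho_k\}$ be generated by the Projective Method of Multipliers (PMM), and define for $k\ge1$ $$x_k=z_{k-1}+\lambda w_{k-1}+\lambda(Cv_k-d),\quad b_k=d-Cv_k,\quad y_k=x_k-\lambda(w_{k-1}-Mu_k),\quad a_k=-Mu_k.$$ Then for every iteration $k\ge1$ that reaches step 3: (i) $b_k\in\partial h_2(x_k)$ and $\lambda b_k+x_k=z_{k-1}+\lambda w_{k-1}$; (ii) $a_k\in\partial h_1(y_k)$ and $\lambda a_k+y_k=(1-\alpha)z_{k-1}+\alpha x_k-\lambda w_{k-1}$ with $\alpha=1$; (iii) $\gamma_k=\dfrac{\langle z_{k-1}-x_k,b_k-w_{k-1}\rangle+\langle z_{k-1}-y_k,a_k+w_{k-1}\rangle}{\|a_k+b_k\|^2+\|x_k-y_k\|^2}$; (iv) $z_k=z_{k-1}-\rho_k\gamma_k(a_k+b_k)$ and $w_k=w_{k-1}-\rho_k\gamma_k(x_k-y_k)$. That is, the PMM is the instance of the Eckstein–Svaiter projective splitting recursion applied to $\partial h_1,\partial h_2$ with parameters $\lambda_k=\mu_k=\lambda$ and $\alpha_k=1$ (which satisfy $\mu_k/\lambda_k-(\alpha_k/2)^2>0$).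
   Context: Let $f:\mathbb{R}^{m_1}\to(-\infty,\infty]$, $g:\mathbb{R}^{m_2}\to(-\infty,\infty]$ be proper closed convex, $M:\mathbb{R}^{m_1}\to\mathbb{R}^n$, $C:\mathbb{R}^{m_2}\to\mathbb{R}^n$ linear, $d\in\mathbb{R}^n$; consider $\min\{f(u)+g(v):Mu+Cv=d\}$ with Lagrangian $L(u,v,z)=f(u)+g(v)+\langle Mu+Cv-d,z\rangle$. A saddle point is $(u^*,v^*,z^* )$ with $L(u^*,v^*,z^* )$ finite and $\min_{(u,v)}L(u,v,z^* )=L(u^*,v^*,z^* )=\max_zL(u^*,v^*,z)$. Let $h_1(z)=f^*(-M^*z)$, $h_2(z)=g^*(-C^*z)+\langle d,z\rangle$ ($^*$ on functions = Fenchel conjugate, on operators = adjoint). Standing assumptions: (A.1) $L$ has a saddle point; (A.2) $\mathrm{ri}(\mathrm{dom} f^* )\cap\mathrm{range}(M^* )\ne\emptyset$; (A.3) $\mathrm{ri}(\mathrm{dom} g^* )\cap\mathrm{range}(C^* )\ne\emptyset$. PMM: given $(z_0,w_0)\in\mathbb{R}^n\times\mathbb{R}^n$, $\lambda>0$, $\bar\rho\in[0,1)$, for $k=1,2,\dots$: (1) let $v_k$ be a minimizer of $g(v)+\langle z_{k-1}+\lambda w_{k-1},Cv-d\rangle+\frac\lambda2\|Cv-d\|^2$ and $u_k$ a minimizer of $f(u)+\langle z_{k-1}+\lambda(Cv_k-d),Mu\rangle+\frac\lambda2\|Mu\|^2$; (2) if $\|Mu_k+Cv_k-d\|+\|Mu_k-w_{k-1}\|=0$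 stop; otherwise set $\gamma_k=\dfrac{\lambda\|Cv_k-d+w_{k-1}\|^2+\lambda\langle d-Cv_k-Mu_k,w_{k-1}-Mu_k\rangle}{\|Mu_k+Cv_k-d\|^2+\lambda^2\|Mu_k-w_{k-1}\|^2}$; (3) choose $\rho_k\in[1-\bar\rho,1+\bar\rho]$ and set $z_k=z_{k-1}+\rho_k\gamma_k(Mu_k+Cv_k-d)$, $w_k=w_{k-1}-\rho_k\gamma_k\lambda(w_{k-1}-Mu_k)$. *)

(* Defs.v *)
(* Euclidean spaces R^m are column vectors 'cV[R]_m,
   linear maps are matrices, adjoints are transposes. *)
From HB Require Import structures.
From mathcomp Require Import all_boot all_order all_algebra.
From mathcomp Require Import all_classical all_reals all_analysis.
Set Implicit Arguments. Unset Strict Implicit. Unset Printing Implicit Defensive.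
Import Order.TTheory GRing.Theory Num.Theory.
Import numFieldTopology.Exports numFieldNormedType.Exports.
Local Open Scope classical_set_scope.
Local Open Scope ring_scope.

Section Defs.
Variable R : realType.

Definition dot (m : nat) (x y : 'cV[R]_m) : R := \sum_(i < m) x i 0 * y i 0.
Definition enorm (m : nat) (x : 'cV[R]_m) : R := Num.sqrt (dot x x).

Definition proper_fun (m : nat) (f : 'cV[R]_m -> \bar R) : Prop :=
  (exists x, f x < +oo)%E /\ (forall x, -oo < f x)%E.

Definition convex_fun (m : nat) (f : 'cV[R]_m -> \bar R) : Prop :=
  forall (x y : 'cV[R]_m) (t : R), 0 < t -> t < 1 ->
    (f (t *: x + (1 - t) *: y)%R <= t%:E * f x + (1 - t)%:E * f y)%E.

(* closed = lower semicontinuous = all sublevel sets closed *)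
Definition closed_fun (m : nat) (f : 'cV[R]_m -> \bar R) : Prop :=
  forall a : R, closed ([set x | (f x <= a%:E)%E] : set 'M[R]_(m, 1)).

Definition conj_fun (m : nat) (f : 'cV[R]_m -> \bar R) (y : 'cV[R]_m) : \bar R :=
  ereal_sup [set ((dot x y)%:E - f x)%E | x in [set: 'cV[R]_m]].

Definition dom_fun (m : nat) (f : 'cV[R]_m -> \bar R) : set 'cV[R]_m :=
  [set x | (f x < +oo)%E].

Definition aff_hull (m : nat) (S : set 'cV[R]_m) : set 'cV[R]_m :=
  [set y | exists (k : nat) (p : 'I_k -> 'cV[R]_m) (t : 'I_k -> R),
     (forall i, S (p i)) /\ \sum_(i < k) t i = 1 /\ y = \sum_(i < k) t i *: p i].

Definition rel_int (m : nat) (S : set 'cV[R]_m) : set 'cV[R]_m :=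
  [set x | S x /\ exists e : R, 0 < e /\
     forall y, aff_hull S y -> enorm (y - x) < e -> S y].

Definition range_mx (m n : nat) (A : 'M[R]_(m, n)) : set 'cV[R]_m :=
  [set A *m z | z in [set: 'cV[R]_n]].

(* subdifferential (empty where h is not finite) *)
Definition subdiff (m : nat) (h : 'cV[R]_m -> \bar R) (x b : 'cV[R]_m) : Prop :=
  h x \is a fin_num /\ forall y, (h x + (dot b (y - x))%:E <= h y)%E.

Definition is_minimizer (T : Type) (phi : T -> \bar R) (x : T) : Prop :=
  forall y, (phi x <= phi y)%E.

Definition lagr (m1 m2 n : nat) (f : 'cV[R]_m1 -> \bar R) (g : 'cV[R]_m2 -> \bar R)
  (M : 'M[R]_(n, m1)) (C : 'M[R]_(n, m2)) (d : 'cV[R]_n)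
  (u : 'cV[R]_m1) (v : 'cV[R]_m2) (z : 'cV[R]_n) : \bar R :=
  (f u + g v + (dot (M *m u + C *m v - d) z)%:E)%E.

Definition saddle_point (m1 m2 n : nat) (f : 'cV[R]_m1 -> \bar R) (g : 'cV[R]_m2 -> \bar R)
  (M : 'M[R]_(n, m1)) (C : 'M[R]_(n, m2)) (d : 'cV[R]_n)
  (us : 'cV[R]_m1) (vs : 'cV[R]_m2) (zs : 'cV[R]_n) : Prop :=
  lagr f g M C d us vs zs \is a fin_num /\
  (forall u v, (lagr f g M C d us vs zs <= lagr f g M C d u v zs)%E) /\
  (forall z, (lagr f g M C d us vs z <= lagr f g M C d us vs zs)%E).

Definition h1 (m1 n : nat) (f : 'cV[R]_m1 -> \bar R) (M : 'M[R]_(n, m1))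
  (z : 'cV[R]_n) : \bar R := conj_fun f (- (M^T *m z)).
Definition h2 (m2 n : nat) (g : 'cV[R]_m2 -> \bar R) (C : 'M[R]_(n, m2)) (d : 'cV[R]_n)
  (z : 'cV[R]_n) : \bar R := (conj_fun g (- (C^T *m z)) + (dot d z)%:E)%E.

End Defs.

(* Main.v *)
Require Import Defs.
From HB Require Import structures.
From mathcomp Require Import all_boot all_order all_algebra.
From mathcomp Require Import all_classical all_reals all_analysis.
From mathcomp Require Import ring lra.
Import Order.TTheory GRing.Theory Num.Theory.
Import numFieldTopology.Exports numFieldNormedType.Exports.
Local Open Scope classical_set_scope.
Local Open Scope ring_scope.

Section H.
Context {R : realType}.

Lemma dotN (m : nat) (u x : 'cV[R]_m) : dot u (- x) = - dot u x.
Proof. rewrite /dot -sumrN; apply: eq_bigr => i _; rewrite !mxE. ring. Qed.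


Lemma dot_ge0 (m : nat) (x : 'cV[R]_m) : 0 <= dot x x.
Proof. by rewrite /dot; apply: sumr_ge0 => i _; rewrite -expr2 sqr_ge0. Qed.

Lemma enorm2 (m : nat) (x : 'cV[R]_m) : enorm x ^+ 2 = dot x x.
Proof. by rewrite /enorm sqr_sqrtr // dot_ge0. Qed.

Lemma dot_mulT (m n : nat) (A : 'M[R]_(n, m)) u x :
  dot u (A^T *m x) = dot (A *m u) x.
Proof.
rewrite /dot.
under eq_bigr do rewrite !mxE big_distrr.
under [RHS]eq_bigr do rewrite !mxE big_distrl.
rewrite [RHS]exchange_big; apply: eq_bigr => j _.
apply: eq_bigr => i _; by rewrite !mxE /= mulrA [u j 0 * _]mulrC.
Qed.

Lemma dot_mul (m n : nat) (A : 'M[R]_(n, m)) u x :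
  dot u (- (A^T *m x)) = - dot (A *m u) x.
Proof. by rewrite dotN dot_mulT. Qed.

Lemma q_aux (a s d t lam : R) : a * (s + t * d) + lam / 2 * ((s + t * d) * (s + t * d)) =
  a * s + lam / 2 * (s * s) + t * ((a + lam * s) * d) + t ^+ 2 * (lam / 2) * (d * d).
Proof. by field. Qed.

Lemma q_expand (n : nat) (c s0 dl : 'cV[R]_n) (t lam : R) :
  dot c (s0 + t *: dl) + lam / 2 * dot (s0 + t *: dl) (s0 + t *: dl)
  = dot c s0 + lam / 2 * dot s0 s0 + t * dot (c + lam *: s0) dl
    + t ^+ 2 * (lam / 2) * dot dl dl.
Proof.
rewrite /dot !mulr_sumr -!big_split /=; apply: eq_bigr => i _; rewrite !mxE; exact: q_aux.
Qed.


Lemma vec_aff (m n : nat) (A : 'M[R]_(n,m)) (e : 'cV[R]_n) (u' uk : 'cV[R]_m) (t : R) :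
  A *m (t *: u' + (1 - t) *: uk) - e = (A *m uk - e) + t *: (A *m (u' - uk)).
Proof.
rewrite mulmxBr mulmxDr -!scalemxAr.
move: (A *m u') (A *m uk) => p q; apply/matrixP => i j; rewrite !mxE; ring.
Qed.

Lemma small_t (a b K : R) : 0 <= K -> (forall t, 0 < t -> t < 1 -> a <= b + t * K) -> a <= b.
Proof.
move=> K0 H; rewrite leNgt; apply/negP => ab.
have e0 : 0 < a - b by rewrite subr_gt0.
set t := (a - b) / (a - b + K + 1).
have d0 : 0 < a - b + K + 1 by lra.
have t0 : 0 < t by rewrite divr_gt0.
have t1 : t < 1 by rewrite ltr_pdivrMr // mul1r; lra.
have := H t t0 t1.
have : t * K < a - b.
  rewrite /t mulrC mulrA ltr_pdivrMr //.
  have h : 0 < (a - b) * (a - b + 1) by apply: mulr_gt0; lra.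
  nra.
lra.
Qed.

Lemma subgrad (m n : nat) (F : 'cV[R]_m -> \bar R) (A : 'M[R]_(n,m)) (e c : 'cV[R]_n)
  (lam : R) (uk : 'cV[R]_m) :
  proper_fun F -> convex_fun F -> 0 < lam ->
  is_minimizer (fun u' => (F u' + (dot c (A *m u' - e)
       + lam / 2 * enorm (A *m u' - e) ^+ 2)%:E)%E) uk ->
  exists fk, F uk = fk%:E /\ forall u' r, F u' = r%:E ->
     fk - dot (c + lam *: (A *m uk - e)) (A *m (u' - uk)) <= r.
Proof.
move=> [[x0 Hx0] Hninf] Hconv Hlam Hmin.
have Hfin : exists fk, F uk = fk%:E.
  have := Hmin x0; have := Hninf uk; have := Hninf x0.
  case: (F uk) => [fk| |]; first by exists fk.
  - by case: (F x0) Hx0.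
  - by [].
case: Hfin => fk E; exists fk; split => // u' r Er.
set dl := A *m (u' - uk).
apply: (@small_t _ _ (lam / 2 * dot dl dl)).
  by apply: mulr_ge0; [lra | exact: dot_ge0].
move=> t t0 t1.
have := Hmin (t *: u' + (1 - t) *: uk).
have := Hconv u' uk t t0 t1.
rewrite /= Er E !enorm2 vec_aff q_expand.
have := Hninf (t *: u' + (1 - t) *: uk).
case: (F (t *: u' + (1 - t) *: uk)) => [ft| |] //= _.
rewrite -!EFinM -!EFinD !lee_fin => h1 h2.
rewrite -/dl in h2.
have : t * fk <= t * (r + dot (c + lam *: (A *m uk - e)) dl + t * (lam / 2 * dot dl dl)).
  nra.
by rewrite ler_pM2l //; lra.
Qed.

Lemma dot_Bmul (m n : nat) (A : 'M[R]_(n,m)) (xx : 'cV[R]_n) (u' uk : 'cV[R]_m) :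
  dot xx (A *m (u' - uk)) = dot (A *m u') xx - dot (A *m uk) xx.
Proof.
rewrite mulmxBr; move: (A *m u') (A *m uk) => p q.
rewrite /dot -sumrB; apply: eq_bigr => i _; rewrite !mxE; ring.
Qed.

Lemma conj_sub (m n : nat) (F : 'cV[R]_m -> \bar R) (A : 'M[R]_(n,m)) (xx : 'cV[R]_n)
  (uk : 'cV[R]_m) (fk : R) :
  F uk = fk%:E -> (forall u' r, F u' = r%:E -> fk - dot xx (A *m (u' - uk)) <= r) ->
  (forall u', (-oo < F u')%E) ->
  (conj_fun F (- (A^T *m xx)) = (- dot (A *m uk) xx - fk)%R%:E)%E /\
  forall yy, ((- dot (A *m uk) yy - fk)%R%:E <= conj_fun F (- (A^T *m yy)))%E.
Proof.
move=> E Hs Hn.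
have ub : forall yy, ((- dot (A *m uk) yy - fk)%R%:E <= conj_fun F (- (A^T *m yy)))%E.
  move=> yy; apply: ereal_sup_ubound; exists uk => //.
  by rewrite dot_mul E -EFinB.
split => //; apply/le_anti; rewrite ub andbT.
apply: ge_ereal_sup => _ [u' _ <-]; rewrite dot_mul.
have := Hn u'; have := Hs u'.
case: (F u') => [r| |] //= H _; last by rewrite addeNy leNye.
have := H r erefl; rewrite dot_Bmul -EFinB lee_fin; lra.
Qed.

Lemma dot_lin1 (n : nat) (d V p q : 'cV[R]_n) :
  dot (d - V) (p - q) = dot d p - dot d q - dot V p + dot V q.
Proof. rewrite /dot -!sumrB -big_split /=; apply: eq_bigr => i _; rewrite !mxE; ring. Qed.

Lemma dot_lin2 (n : nat) (U p q : 'cV[R]_n) :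
  dot (- U) (p - q) = - dot U p + dot U q.
Proof. rewrite /dot -sumrN -big_split /=; apply: eq_bigr => i _; rewrite !mxE; ring. Qed.

Lemma gamma_id (n : nat) (Z W V U d : 'cV[R]_n) (lam : R) :
  let x := Z + lam *: W + lam *: (V - d) in
  let b := d - V in
  let y := x - lam *: (W - U) in
  let a := - U in
  (lam * dot (V - d + W) (V - d + W) + lam * dot (d - V - U) (W - U))
   / (dot (U + V - d) (U + V - d) + lam ^+ 2 * dot (U - W) (U - W))
  = (dot (Z - x) (b - W) + dot (Z - y) (a + W))
   / (dot (a + b) (a + b) + dot (x - y) (x - y)).
Proof.
move=> x b y a; rewrite /x /b /y /a.
congr (_ / _); rewrite /dot !mulr_sumr -!big_split /=; apply: eq_bigr => i _;
  rewrite !mxE; ring.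
Qed.

Lemma vid1 (n : nat) (Z W V d : 'cV[R]_n) (lam : R) :
  lam *: (d - V) + (Z + lam *: W + lam *: (V - d)) = Z + lam *: W.
Proof. apply/matrixP => i j; rewrite !mxE; ring. Qed.

Lemma vid2 (n : nat) (Z W V U d : 'cV[R]_n) (lam : R) :
  lam *: (- U) + (Z + lam *: W + lam *: (V - d) - lam *: (W - U)) =
  (1 - 1) *: Z + 1 *: (Z + lam *: W + lam *: (V - d)) - lam *: W.
Proof. apply/matrixP => i j; rewrite !mxE; ring. Qed.

Lemma vid3 (n : nat) (Z W V U d : 'cV[R]_n) (lam : R) :
  Z + lam *: (V - d) + lam *: U = Z + lam *: W + lam *: (V - d) - lam *: (W - U).
Proof. apply/matrixP => i j; rewrite !mxE; ring. Qed.

Lemma vid4 (n : nat) (Z V U d : 'cV[R]_n) (s : R) :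
  Z + s *: (U + V - d) = Z - s *: (- U + (d - V)).
Proof. apply/matrixP => i j; rewrite !mxE; ring. Qed.

Lemma vid5 (n : nat) (Z W V U d : 'cV[R]_n) (s lam : R) :
  W - (s * lam) *: (W - U) = W - s *: ((Z + lam *: W + lam *: (V - d))
     - (Z + lam *: W + lam *: (V - d) - lam *: (W - U))).
Proof. apply/matrixP => i j; rewrite !mxE; ring. Qed.

End H.

Theorem mainTheorem3 (R : realType) (m1 m2 n : nat)
  (f : 'cV[R]_m1 -> \bar R) (g : 'cV[R]_m2 -> \bar R)
  (M : 'M[R]_(n, m1)) (C : 'M[R]_(n, m2)) (d : 'cV[R]_n)
  (Hf : [/\ proper_fun f, convex_fun f & closed_fun f])
  (Hg : [/\ proper_fun g, convex_fun g & closed_fun g])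
  (A1 : exists us vs zs, saddle_point f g M C d us vs zs)
  (A2 : exists p, rel_int (dom_fun (conj_fun f)) p /\ range_mx M^T p)
  (A3 : exists q, rel_int (dom_fun (conj_fun g)) q /\ range_mx C^T q)
  (lambda rhobar : R) (Hlambda : 0 < lambda) (Hrhobar : 0 <= rhobar < 1)
  (u : nat -> 'cV[R]_m1) (v : nat -> 'cV[R]_m2) (z w : nat -> 'cV[R]_n)
  (gamma rho : nat -> R) (k : nat) (Hk : (1 <= k)%N)
  (* step 1 *)
  (Hv : forall j, (1 <= j <= k)%N ->
     is_minimizer (fun v' => (g v' + (dot (z j.-1 + lambda *: w j.-1) (C *m v' - d)
        + lambda / 2 * enorm (C *m v' - d) ^+ 2)%:E)%E) (v j))
  (Hu : forall j, (1 <= j <= k)%N ->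
     is_minimizer (fun u' => (f u' + (dot (z j.-1 + lambda *: (C *m v j - d)) (M *m u')
        + lambda / 2 * enorm (M *m u') ^+ 2)%:E)%E) (u j))
  (* step 2: iterations 1..k do not stop, i.e. iteration k reaches step 3 *)
  (Hnostop : forall j, (1 <= j <= k)%N ->
     enorm (M *m u j + C *m v j - d) + enorm (M *m u j - w j.-1) != 0)
  (Hgamma : forall j, (1 <= j <= k)%N ->
     gamma j = (lambda * enorm (C *m v j - d + w j.-1) ^+ 2
                + lambda * dot (d - C *m v j - M *m u j) (w j.-1 - M *m u j))
             / (enorm (M *m u j + C *m v j - d) ^+ 2
                + lambda ^+ 2 * enorm (M *m u j - w j.-1) ^+ 2))
  (* step 3 *)
  (Hrho : forall j, (1 <= j <= k)%N -> 1 - rhobar <= rho j <= 1 + rhobar)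
  (Hz : forall j, (1 <= j <= k)%N ->
     z j = z j.-1 + (rho j * gamma j) *: (M *m u j + C *m v j - d))
  (Hw : forall j, (1 <= j <= k)%N ->
     w j = w j.-1 - (rho j * gamma j * lambda) *: (w j.-1 - M *m u j)) :
  let x := z k.-1 + lambda *: w k.-1 + lambda *: (C *m v k - d) in
  let b := d - C *m v k in
  let y := x - lambda *: (w k.-1 - M *m u k) in
  let a := - (M *m u k) in
  let alpha : R := 1 in
  [/\ subdiff (h2 g C d) x b /\ lambda *: b + x = z k.-1 + lambda *: w k.-1,
      subdiff (h1 f M) y a /\
        lambda *: a + y = (1 - alpha) *: z k.-1 + alpha *: x - lambda *: w k.-1,
      gamma k = (dot (z k.-1 - x) (b - w k.-1) + dot (z k.-1 - y) (a + w k.-1))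
                / (enorm (a + b) ^+ 2 + enorm (x - y) ^+ 2),
      z k = z k.-1 - (rho k * gamma k) *: (a + b) /\
        w k = w k.-1 - (rho k * gamma k) *: (x - y)
    & 0 < lambda / lambda - (alpha / 2) ^+ 2].
Proof.
move=> x b y a alpha; rewrite /x /b /y /a /alpha.
have hk : (1 <= k <= k)%N by rewrite Hk leqnn.
case: Hg => Pg Cg _; case: Hf => Pf Cf _.
have [gk [Eg Hg']] := subgrad _ _ _ _ _ _ _ _ Pg Cg Hlambda (Hv k hk).
have [Cx Cy] := conj_sub _ _ _ _ _ _ _ Eg Hg' Pg.2.
have Hu0 : is_minimizer (fun u' => (f u' + (dot (z k.-1 + lambda *: (C *m v k - d))
     (M *m u' - 0) + lambda / 2 * enorm (M *m u' - 0) ^+ 2)%:E)%E) (u k).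
  by move=> yy /=; rewrite !subr0; exact: (Hu k hk yy).
have [fk [Ef Hf']] := subgrad _ _ _ _ _ _ _ _ Pf Cf Hlambda Hu0.
have [Cx' Cy'] := conj_sub _ _ _ _ _ _ _ Ef Hf' Pf.2.
rewrite subr0 (vid3 _ _ (w k.-1)) in Cx'.
split.
- split; last exact: vid1.
  split; first by rewrite /h2 Cx -EFinD.
  move=> y'; rewrite /h2 Cx; apply: le_trans (leeD2r _ (Cy y')).
  rewrite -!EFinD lee_fin dot_lin1; lra.
- split; last exact: vid2.
  split; first by rewrite /h1 Cx'.
  move=> y'; rewrite /h1 Cx'; apply: le_trans (Cy' y').
  rewrite -!EFinD lee_fin dot_lin2; lra.
- rewrite (Hgamma k hk) !enorm2; exact: (gamma_id _ (z k.-1)).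
- by split; [rewrite (Hz k hk) vid4 | rewrite (Hw k hk) (vid5 _ (z k.-1) _ (C *m v k) _ d)].
- rewrite divff ?lt0r_neq0 //; lra.
Qed.
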